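(* Let $\beta\ge 4$ be a constant, let $n$ be sufficiently large, and let $\alpha=\beta/\log n$. Throw $n$ balls independently and uniformly at random into $m=\alpha n=\beta n/\log n$ bins, and let $X_1$ be the number of bins containing exactly one ball. Then $X_1\ge n^{1-1/\beta}/(4\log n)$ with high probability, i.e., with probability at least $1-n^{-c}$ for an arbitrary fixed constant $c$ (for $n$ sufficiently large).
   Context: All logarithms are natural. The number of bins $m=\beta n/\log n$ is assumed to be an integer. *)

(* Defs.v *)
From HB Require Import structures.
From mathcomp Require Import all_boot all_order all_algebra.
From mathcomp Require Import all_classical all_reals all_analysis.
Set Implicit Arguments. Unset Strict Implicit. Unset Printing Implicit Defensive.
Import Order.TTheory GRing.Theory Num.Theory.
Local Open Scope ring_scope.

(* An outcome of throwing n balls into m bins: f i = bin of ball i.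
   Uniform independent throws = uniform distribution on {ffun 'I_n -> 'I_m}. *)

Definition X1 (n m : nat) (f : {ffun 'I_n -> 'I_m}) : nat :=
  #|[set j : 'I_m | #|[set i : 'I_n | f i == j]| == 1%N]|.

Definition prob_X1_ge (R : realType) (n m : nat) (t : R) : R :=
  (#|[set f : {ffun 'I_n -> 'I_m} | t <= (X1 f)%:R]|)%:R / (m ^ n)%:R.

(* Main.v *)
Require Import Defs.
From HB Require Import structures.
From mathcomp Require Import all_boot all_order all_algebra.
From mathcomp Require Import all_classical all_reals all_analysis.
From mathcomp Require Import ring lra.
Set Implicit Arguments. Unset Strict Implicit. Unset Printing Implicit Defensive.
Import Order.TTheory GRing.Theory Num.Theory.
Local Open Scope ring_scope.

Section Conc.
Variables (R : realType) (T : finType).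

Definition ext n (a : T) (g : {ffun 'I_n -> T}) : {ffun 'I_n.+1 -> T} :=
  [ffun i => if unlift ord0 i is Some j then g j else a].

Lemma ext0 n a g : @ext n a g ord0 = a.
Proof. by rewrite ffunE unlift_none. Qed.

Lemma extS n a g j : @ext n a g (lift ord0 j) = g j.
Proof. by rewrite ffunE liftK. Qed.

Lemma sum_ext n (H : {ffun 'I_n.+1 -> T} -> R) :
  \sum_f H f = \sum_a \sum_(g : {ffun 'I_n -> T}) H (ext a g).
Proof.
rewrite pair_big /=.
rewrite (reindex (fun p : T * {ffun 'I_n -> T} => ext p.1 p.2)) //=.
exists (fun f => (f ord0, [ffun j => f (lift ord0 j)])) => [[a g] _|f _] /=.
  by rewrite ext0; congr pair; apply/ffunP => j; rewrite ffunE extS.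
apply/ffunP => i; rewrite ffunE; case: unliftP => [j ->|->] //.
by rewrite ffunE.
Qed.

Lemma expR_quad (x : R) : `|x| <= 1/2 -> expR x <= 1 + x + 2 * x ^+ 2.
Proof.
move=> hx; move: hx; rewrite ler_norml => /andP[hx2 hx1].
have h1 : 1 - x <= expR (- x) by have := expR_ge1Dx (- x).
have he : expR x * expR (- x) = 1 by rewrite -expRD subrr expR0.
have hp := expR_gt0 x.
have hq : 1 <= (1 - x) * (1 + x + 2 * x ^+ 2).
  have -> : (1 - x) * (1 + x + 2 * x ^+ 2) = 1 + x ^+ 2 * (1 - 2 * x) by ring.
  rewrite lerDl; apply: mulr_ge0; [exact: sqr_ge0| lra].
have hP : 0 <= 1 + x + 2 * x ^+ 2 by nra.
apply: le_trans (_ : expR x * ((1 - x) * (1 + x + 2 * x ^+ 2)) <= _).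
  by rewrite -{1}(mulr1 (expR x)) ler_wpM2l // ltW.
have h2 : expR x * (1 - x) <= 1 by rewrite -[X in _ <= X]he; apply: ler_wpM2l => //; apply: ltW.
by rewrite mulrA -{2}(mul1r (1 + x + 2 * x ^+ 2)); apply: ler_wpM2r.
Qed.

Definition bdiff n (d : R) (F : {ffun 'I_n -> T} -> R) :=
  forall (f g : {ffun 'I_n -> T}) i, (forall k, k != i -> f k = g k) -> `|F f - F g| <= d.

Lemma card_ffunR n : #|{ffun 'I_n -> T}|%:R = (#|T|%:R : R) ^+ n.
Proof. by rewrite card_ffun card_ord natrX. Qed.

Lemma sum_constR (U : finType) (c : R) : \sum_(u : U) c = #|U|%:R * c.
Proof. by rewrite sumr_const mulr_natl. Qed.

Lemma avg_diff_le (U : finType) (d : R) (h1 h2 : U -> R) :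
  (0 < #|U|)%N -> (forall u, `|h1 u - h2 u| <= d) ->
  `|(\sum_u h1 u) / #|U|%:R - (\sum_u h2 u) / #|U|%:R| <= d.
Proof.
move=> hU hd.
have hUp : (0 : R) < #|U|%:R by rewrite ltr0n.
rewrite -mulrBl -sumrB normrM [`|_^-1|]ger0_norm ?invr_ge0 ?ler0n //.
rewrite ler_pdivrMr //.
apply: le_trans (ler_norm_sum _ _ _) _.
apply: le_trans (_ : \sum_(u : U) d <= _); first by apply: ler_sum => u _.
by rewrite sum_constR mulrC.
Qed.

Lemma conc n (d lam : R) (F : {ffun 'I_n -> T} -> R) :
  (0 < #|T|)%N -> 0 <= lam -> lam * d <= 1/2 -> bdiff d F ->
  \sum_f expR (lam * ((\sum_g F g) / (#|T|%:R) ^+ n - F f))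
    <= (#|T|%:R) ^+ n * expR (2 * n%:R * lam ^+ 2 * d ^+ 2).
Proof.
move=> hT hlam hld.
have hN : (0 : R) < #|T|%:R by rewrite ltr0n.
elim: n F => [|n IH] F hF.
  have all_eq : forall f g : {ffun 'I_0 -> T}, f = g.
    by move=> f g; apply/ffunP => -[].
  have [f0 _] : exists f : {ffun 'I_0 -> T}, True.
    by exists [ffun i : 'I_0 => match i with Ordinal k hk => False_rect T (notF hk) end].
  rewrite !expr0 divr1 mul1r /= mulr0 !mul0r expR0.
  have -> : \sum_g F g = F f0 by rewrite (big_pred1 f0) // => g; rewrite /= (all_eq g f0) eqxx.
  rewrite (big_pred1 f0) ?subrr ?mulr0 ?expR0 // => g.
  by rewrite /= (all_eq g f0) eqxx.
set N := (#|T|%:R : R).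
set Nn := N ^+ n.
have hNn : 0 < Nn by rewrite exprn_gt0.
pose G a := (\sum_g F (ext a g)) / Nn.
have hmu : (\sum_f F f) / N ^+ n.+1 = (\sum_a G a) / N.
  rewrite sum_ext /G -mulr_suml exprS /Nn; field.
  by rewrite -/Nn; apply/andP; split; rewrite gt_eqF.
rewrite hmu.
set mu := (\sum_a G a) / N.
have hG : forall a b, `|G a - G b| <= d.
  move=> a b; rewrite /G /Nn -card_ffunR.
  apply: avg_diff_le; first by rewrite card_ffun expn_gt0 hT.
  move=> g; apply: hF (ord0) _ => k hk.
  rewrite !ffunE; case: unliftP hk => [j ->|->] //; by rewrite eqxx.
have hmuG : forall a, `|mu - G a| <= d.
  move=> a.
  have -> : G a = (\sum_(b : T) G a) / N.
    by rewrite sum_constR /N mulrC mulrA mulVf ?mul1r // gt_eqF.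
  exact: avg_diff_le.
rewrite sum_ext.
apply: le_trans (_ : \sum_a expR (lam * (mu - G a)) * (Nn * expR (2 * n%:R * lam ^+ 2 * d ^+ 2)) <= _).
  apply: ler_sum => a _.
  have -> : \sum_g expR (lam * (mu - F (ext a g))) =
     expR (lam * (mu - G a)) * \sum_g expR (lam * ((\sum_g F (ext a g)) / Nn - F (ext a g))).
    rewrite mulr_sumr; apply: eq_bigr => g _; rewrite -expRD /G; congr expR; ring.
  apply: ler_wpM2l; first exact: expR_ge0.
  apply: (IH (fun g => F (ext a g))).
  move=> g g' i hi /=; apply: hF (lift ord0 i) _ => k hk.
  rewrite !ffunE; case: unliftP hk => [j ->|->] //.
  by rewrite (inj_eq lift_inj) => /hi ->.
rewrite -mulr_suml.
have hout : \sum_a expR (lam * (mu - G a)) <= N * expR (2 * lam ^+ 2 * d ^+ 2).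
  apply: le_trans (_ : \sum_a (1 + lam * (mu - G a) + 2 * (lam ^+ 2 * d ^+ 2)) <= _).
    apply: ler_sum => a _.
    have hx : `|lam * (mu - G a)| <= lam * d.
      by rewrite normrM ger0_norm // ler_wpM2l.
    apply: le_trans (expR_quad _) _; first by apply: le_trans hx hld.
    rewrite lerD2l ler_wpM2l // -exprMn -real_normK ?num_real //.
    by rewrite lerXn2r ?nnegrE // (le_trans _ hx).
  rewrite big_split big_split /= -mulr_sumr.
  have -> : \sum_a (mu - G a) = 0.
    by rewrite sumrB sum_constR /mu -/N mulrC mulfVK ?subrr // gt_eqF.
  rewrite mulr0 addr0 !sum_constR -/N -mulrDr; apply: ler_wpM2l; first exact: ltW.
  by rewrite !mulrA; exact: expR_ge1Dx.
apply: le_trans (_ : N * expR (2 * lam ^+ 2 * d ^+ 2) * (Nn * expR (2 * n%:R * lam ^+ 2 * d ^+ 2)) <= _).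
  by apply: ler_wpM2r => //; apply: mulr_ge0; [exact: ltW| exact: expR_ge0].
rewrite /Nn mulrACA -expRD -exprS le_eqVlt; apply/orP; left; apply/eqP; congr (_ * expR _).
by rewrite -natr1; ring.
Qed.

End Conc.

Section Comb.
Variables n m : nat.
Implicit Types f g : {ffun 'I_n -> 'I_m}.

Definition alone f (i : 'I_n) := [forall k, (k != i) ==> (f k != f i)].
Definition Acnt f := #|[set i | alone f i]|.

Definition X1' f : nat :=
  #|[set j : 'I_m | #|[set i : 'I_n | f i == j]| == 1%N]|.

Lemma alone_inj f : {in [set i | alone f i] &, injective f}.
Proof.
move=> i j; rewrite !inE => /forallP hi _ eij.
apply/eqP; apply: contraT => nij.
by have := hi j; rewrite eq_sym nij /= eij eqxx.
Qed.

Lemma A_le_X1 f : (Acnt f <= X1' f)%N.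
Proof.
rewrite /Acnt -(card_in_imset (@alone_inj f)).
apply: subset_leq_card; apply/fintype.subsetP => _ /imsetP[i hi ->].
rewrite inE; apply/eqP.
have -> : [set k | f k == f i] = [set i].
  apply/setP => k; rewrite !inE. apply/idP/idP => [hk|/eqP -> //].
  apply: contraLR hk => nk; by move: hi; rewrite inE => /forallP /(_ k); rewrite nk.
exact: cards1.
Qed.

Lemma A_diff f g (i : 'I_n) : (forall k, k != i -> f k = g k) ->
  (Acnt f <= Acnt g + 2)%N.
Proof.
move=> hfg.
set S := [set k | alone f k && (f k == g i)].
have hS : (#|S| <= 1)%N.
  apply/card_le1_eqP => k l; rewrite !inE => /andP[hk ek] /andP[hl el].
  by apply: (alone_inj (f := f)); rewrite ?inE // (eqP ek) (eqP el).
have sub : [set k | alone f k] \subset ([set k | alone g k] :|: [set i]) :|: S.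
  apply/fintype.subsetP => k; rewrite !inE => hk.
  case: (boolP (k == i)) => [/eqP ->|ki]; first by rewrite orbT.
  case: (boolP (alone g k)) => //= ngk; rewrite hk /=.
  move: ngk => /forallPn [l]; rewrite negb_imply negbK => /andP[lk /eqP egl].
  case: (boolP (l == i)) => [/eqP li|li].
    by rewrite -li egl hfg.
  move: hk => /forallP /(_ l); rewrite lk /= hfg // hfg // egl eqxx.
  done.
apply: leq_trans (subset_leq_card sub) _.
apply: leq_trans (leq_card_setU _ _).1 _.
have h := (leq_card_setU [set k | alone g k] [set i]).1.
rewrite cards1 in h.
by apply: leq_trans (leq_add h hS) _; rewrite -addnA.
Qed.

Lemma sum_bool (U : finType) (P : pred U) : (\sum_(u : U) (P u : nat))%N = #|P|.
Proof.
by rewrite -sum1_card [RHS]big_mkcond /=; apply: eq_bigr => u _; rewrite unfold_in; case: (P u).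
Qed.

Lemma card_alone_ij (i : 'I_n) (j : 'I_m) :
  #|[pred f : {ffun 'I_n -> 'I_m} | alone f i && (f i == j)]| = (m.-1 ^ n.-1)%N.
Proof.
have -> : #|[pred f : {ffun 'I_n -> 'I_m} | alone f i && (f i == j)]| =
   #|family (fun k : 'I_n => if k == i then pred1 j else predC1 j)|.
  apply: eq_card => f; rewrite !inE /=; apply/andP/forallP.
    case=> /forallP ha /eqP fi k; case: (boolP (k == i)) => [/eqP ->|ki].
      by apply/eqP.
    by apply/negP; rewrite /= -fi; have := ha k; rewrite ki /= => /negP.
  move=> hf; have fi : f i == j by have := hf i; rewrite eqxx.
  split=> //; apply/forallP => k; apply/implyP => ki.
  by have := hf k; rewrite (negbTE ki) /= (eqP fi).
rewrite card_family foldrE big_map big_enum /=.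
rewrite (bigD1 i) //= eqxx card1 mul1n.
rewrite (eq_bigr (fun _ => m.-1)); last first.
  by move=> k ki; rewrite (negbTE ki) cardC1 card_ord.
rewrite prod_nat_const; congr (expn _ _).
by rewrite cardC1 card_ord.
Qed.

Lemma sum_A : (0 < n)%N ->
  (\sum_(f : {ffun 'I_n -> 'I_m}) Acnt f)%N = (n * (m * m.-1 ^ n.-1))%N.
Proof.
move=> hn.
have -> : (\sum_(f : {ffun 'I_n -> 'I_m}) Acnt f =
        \sum_f \sum_(i : 'I_n) (alone f i : nat))%N.
  apply: eq_bigr => f _; rewrite /Acnt -sum1_card big_mkcond /=; apply: eq_bigr => i _; rewrite inE; by case: (alone f i).
rewrite exchange_big /=.
rewrite -[n in (n * _)%N]card_ord -sum_nat_const; apply: eq_bigr => i _.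
have -> : (\sum_(f : {ffun 'I_n -> 'I_m}) (alone f i : nat) =
   \sum_f \sum_(j : 'I_m) (alone f i && (f i == j) : nat))%N.
  apply: eq_bigr => f _; rewrite (bigD1 (f i)) //= eqxx andbT big1 ?addn0 //.
  by move=> j hj; rewrite eq_sym (negbTE hj) andbF.
rewrite exchange_big /= -[m in (m * _)%N]card_ord -sum_nat_const.
apply: eq_bigr => j _.
by rewrite (sum_bool (fun f => alone f i && (f i == j))) card_alone_ij.
Qed.

End Comb.

Lemma y_lt_expR (R : realType) (y : R) : y < expR y.
Proof. by apply: lt_le_trans (expR_ge1Dx y); lra. Qed.

Lemma E1le (R : realType) : expR 1 <= (4 : R).
Proof.
have eh : expR (1/2) <= (2 : R).
  apply: le_trans (expR_quad _) _; first by rewrite ger0_norm; lra.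
  lra.
have -> : (1 : R) = 1/2 + 1/2 by lra.
rewrite expRD; have := expR_gt0 (1/2 : R); nra.
Qed.

Lemma basic_facts (R : realType) (beta nR L mR : R) :
  4 <= beta -> 16 <= nR -> expR L = nR -> mR = beta * nR / L ->
  [/\ 2 <= L, L ^+ 2 < 4 * nR, 2 <= mR & nR <= mR * (mR - 1)].
Proof.
move=> hbeta n16R nE hm.
have nR_pos : 0 < nR by lra.
have E1 := E1le R.
have L2 : 2 <= L.
  rewrite -ler_expR nE; have -> : (2 : R) = 1 + 1 by lra.
  rewrite expRD; have := expR_gt0 (1 : R); nra.
have L2n : L ^+ 2 < 4 * nR.
  have h1 := y_lt_expR (L / 2).
  have h2 : expR (L / 2) ^+ 2 = nR by rewrite -expRM_natl -nE; congr expR; field.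
  have h3 : 0 < L / 2 by lra.
  rewrite -h2; nra.
have Lpos : 0 < L by lra.
have mL : mR * L = beta * nR by rewrite hm; field; lra.
have mgtL : L < mR.
  have : L * L < mR * L.
    rewrite mL; move: L2n; rewrite expr2 => h; nra.
  by rewrite ltr_pM2r.
have m2R : 2 <= mR by lra.
split => //.
have h1 : 16 * nR ^+ 2 <= (mR * L) ^+ 2.
  rewrite mL exprMn; apply: ler_wpM2r; first exact: sqr_ge0.
  rewrite expr2; nra.
have h2 : 4 * nR < mR ^+ 2.
  have : 4 * nR * (4 * nR) < mR ^+ 2 * (4 * nR).
    have -> : 4 * nR * (4 * nR) = 16 * nR ^+ 2 by ring.
    apply: le_lt_trans h1 _; rewrite exprMn ltr_pM2l //; last by apply: exprn_gt0; lra.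
  by rewrite ltr_pM2r //; lra.
move: h2; rewrite expr2 => h2; nra.
Qed.

Lemma mean_facts (R : realType) (beta nR L mR : R) (k : nat) :
  4 <= beta -> 2 <= L -> 2 <= mR -> nR <= mR * (mR - 1) -> mR = beta * nR / L ->
  nR = k.+1%:R ->
  nR * expR (- (L / beta)) * expR (-1) <= nR * ((mR - 1) / mR) ^+ k.
Proof.
move=> hbeta L2 m2R mm hm nk.
have nR_pos : 0 < nR by rewrite nk ltr0n.
have mpos : 0 < mR by lra.
have m1pos : 0 < mR - 1 by lra.
pose q := (mR - 1) / mR.
have q0 : 0 <= q by rewrite /q divr_ge0 //; lra.
have q1 : q <= 1 by rewrite /q ler_pdivrMr //; lra.
have qge : expR (- (mR - 1)^-1) <= q.
  have -> : q = (mR / (mR - 1))^-1 by rewrite /q invf_div.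
  rewrite expRN lef_pV2 ?posrE ?expR_gt0 ?divr_gt0 //.
  have -> : mR / (mR - 1) = 1 + (mR - 1)^-1.
    by field; exact: lt0r_neq0 m1pos.
  exact: expR_ge1Dx.
have qn : expR (- (nR / (mR - 1))) <= q ^+ k.
  apply: le_trans (_ : q ^+ k.+1 <= _); last by apply: ler_wiXn2l => //; exact: leqnSn.
  have -> : - (nR / (mR - 1)) = nR * (- (mR - 1)^-1) by rewrite mulrN.
  rewrite nk expRM_natl; apply: lerXn2r => //; rewrite nnegrE //; exact: expR_ge0.
have ex : - (L / beta) - 1 <= - (nR / (mR - 1)).
  have hL : L / beta = nR / mR.
    rewrite hm; field; apply/and3P; split; apply: lt0r_neq0 => //; lra.
  have hs : nR / (mR - 1) = nR / mR + nR / (mR * (mR - 1)).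
    by field; rewrite (lt0r_neq0 m1pos) (lt0r_neq0 mpos).
  have : nR / (mR * (mR - 1)) <= 1 by rewrite ler_pdivrMr ?mul1r //; apply: mulr_gt0.
  rewrite hL hs; lra.
rewrite -mulrA -expRD; apply: ler_wpM2l; first lra.
apply: le_trans qn; by rewrite ler_expR.
Qed.

Lemma final_facts (R : realType) (beta c nR L mu P S : R) :
  4 <= beta -> 0 < c -> 2 <= L -> expR L = nR -> (8192 * c) ^+ 4 < nR ->
  P = nR * expR (- (L / beta)) -> S = P * expR (-1) / 2 ->
  P * expR (-1) <= mu ->
  [/\ P / (4 * L) <= mu - S, 0 <= S / (16 * nR), S / (16 * nR) * 2 <= 1/2
    & c * L <= S ^+ 2 / (32 * nR)].
Proof.
move=> hbeta hc L2 nE nK hP hS hmu.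
have nR_pos : 0 < nR by rewrite -nE expR_gt0.
pose u := expR (L / 4).
have upos : 0 < u by exact: expR_gt0.
have u4 : u ^+ 4 = nR by rewrite /u -expRM_natl -nE; congr expR; field.
have uc : 8192 * c <= u.
  rewrite leNgt; apply/negP => hu.
  have hk : 0 <= 8192 * c by clear - hc; lra.
  have : u ^+ 4 <= (8192 * c) ^+ 4.
    apply: lerXn2r; [rewrite nnegrE; exact: ltW | rewrite nnegrE; exact: hk | exact: ltW].
  by rewrite u4 => h; have := lt_le_trans nK h; rewrite ltxx.
clear nK.
have eL : expR (- (L / beta)) <= 1 by rewrite expR_le1 oppr_le0 divr_ge0 //; lra.
have Ppos : 0 < P by rewrite hP mulr_gt0 // expR_gt0.
have Ple : P <= nR by rewrite hP -{2}(mulr1 nR) ler_wpM2l //; lra.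
have E1 := E1le R.
have em : expR (-1) = (expR 1)^-1 :> R by rewrite -expRN.
have e2 : expR (-1) <= 1 :> R.
  by rewrite em invf_le1 ?expR_gt0 //; apply: ltW; rewrite expR_gt1; lra.
have e1 : 1/4 <= expR (-1) :> R.
  have -> : 1/4 = (4 : R)^-1 by rewrite div1r.
  by rewrite em lef_pV2 ?posrE ?expR_gt0 //; lra.
have h2' : P * (1/4) <= P * expR (-1) by apply: ler_wpM2l => //; lra.
have h2'' : P * expR (-1) <= P by rewrite -{2}(mulr1 P); apply: ler_wpM2l => //; lra.
have Spos : 0 < S by rewrite hS; lra.
split.
- have h1 : P / (4 * L) <= P / 8.
    apply: ler_wpM2l; first exact: ltW.
    by rewrite lef_pV2 ?posrE; clear - L2; lra.
  rewrite hS; clear - h1 hmu h2'; lra.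
- by apply: divr_ge0; [exact: ltW | clear - nR_pos; lra].
- have -> : S / (16 * nR) * 2 = S / (8 * nR) by field; exact: lt0r_neq0 nR_pos.
  rewrite ler_pdivrMr; last by clear - nR_pos; lra.
  rewrite hS; clear - h2'' Ple nR_pos; lra.
have Lu : L <= 4 * u by have := y_lt_expR (L / 4); rewrite -/u; clear; lra.
have u2 : u ^+ 2 = nR * expR (- (L / 2)).
  by rewrite -nE -expRD /u -expRM_natl; congr expR; field.
have SP : P / 8 <= S by rewrite hS; clear - h2'; lra.
have S2 : P ^+ 2 / 64 <= S ^+ 2.
  have -> : P ^+ 2 / 64 = (P / 8) ^+ 2 by field.
  by apply: lerXn2r; rewrite ?nnegrE; clear - Ppos SP; lra.
have P2 : nR * u ^+ 2 <= P ^+ 2.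
  rewrite u2 hP exprMn [nR ^+ 2]expr2 -mulrA; apply: ler_wpM2l; first exact: ltW.
  apply: ler_wpM2l; first exact: ltW.
  rewrite expr2 -expRD ler_expR.
  have : L / beta <= L / 4.
    apply: ler_wpM2l; first by clear - L2; lra.
    by rewrite lef_pV2 ?posrE; clear - hbeta; lra.
  clear - hbeta; lra.
rewrite ler_pdivlMr; last by clear - nR_pos; lra.
have : c * L <= c * (4 * u) by apply: ler_wpM2l; [exact: ltW | exact: Lu].
have : 4 * c * u * (32 * nR) <= u * u * nR / 64.
  have : 0 <= u * nR by apply: mulr_ge0; exact: ltW.
  clear - uc hc upos nR_pos; nra.
have : u * u * nR <= P ^+ 2 by rewrite mulrC -expr2.
move=> h3 h4 h5; clear - h3 h4 h5 S2 nR_pos; nra.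
Qed.

Lemma tail_bound (R : realType) (T : finType) n (d lam s : R) (F : {ffun 'I_n -> T} -> R) :
  (0 < #|T|)%N -> 0 <= lam -> lam * d <= 1/2 -> bdiff d F ->
  #|[set f | F f <= (\sum_g F g) / (#|T|%:R) ^+ n - s]|%:R
    <= (#|T|%:R) ^+ n * expR (2 * n%:R * lam ^+ 2 * d ^+ 2 - lam * s).
Proof.
move=> hT hl hld hF.
have h := conc hT hl hld hF.
set mu := (\sum_g F g) / (#|T|%:R) ^+ n.
set B := [set f | F f <= mu - s].
have h2 : #|B|%:R * expR (lam * s) <= \sum_f expR (lam * (mu - F f)).
  rewrite (bigID (mem B)) /=.
  apply: le_trans (_ : \sum_(f | f \in B) expR (lam * (mu - F f)) <= _); last first.
    by rewrite lerDl; apply: sumr_ge0 => f _; exact: expR_ge0.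
  apply: le_trans (_ : \sum_(f | f \in B) expR (lam * s) <= _).
    by rewrite sumr_const mulr_natl.
  apply: ler_sum => f; rewrite inE => hf.
  rewrite ler_expR; apply: ler_wpM2l => //; lra.
rewrite expRD expRN mulrA ler_pdivlMr ?expR_gt0 //.
exact: le_trans h2 h.
Qed.

Theorem lemma2p3 (R : realType) (beta c : R) (hbeta : 4 <= beta) (hc : 0 < c) :
  exists N : nat, forall n m : nat, (N <= n)%N ->
    m%:R = beta * n%:R / ln (n%:R : R) ->
    1 - (n%:R : R) `^ (- c) <=
      prob_X1_ge n m ((n%:R : R) `^ (1 - beta^-1) / (4 * ln (n%:R : R))).
Proof.
pose K := (8192 * c) ^+ 4.
exists (maxn 16 (Num.truncn K).+1) => n m hN hm.
have n16 : (16 <= n)%N by apply: leq_trans hN; rewrite leq_maxl.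
have nK : K < n%:R.
  apply: lt_le_trans (truncnS_gt K) _; rewrite ler_nat.
  by apply: leq_trans hN; rewrite leq_maxr.
have n16R : (16 : R) <= n%:R by rewrite (ler_nat R 16 n).
have n0 : (0 < n)%N by apply: leq_trans n16.
set nR := (n%:R : R) in hm nK n16R *.
set L := ln nR in hm *.
have nR_pos : 0 < nR by rewrite /nR ltr0n.
have nE : expR L = nR by rewrite /L lnK // posrE.
have [L2 L2n m2R mm] := basic_facts hbeta n16R nE hm.
have m2 : (2 <= m)%N by rewrite -(ler_nat R).
set mR := (m%:R : R) in hm m2R mm *.
have mpos : 0 < mR by rewrite /mR ltr0n; apply: leq_trans m2.
have m1R : (m.-1)%:R = mR - 1.
  by rewrite /mR -(prednK (leq_trans _ m2)) // -natr1 addrK.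
pose F := fun f : {ffun 'I_n -> 'I_m} => ((Acnt f)%:R : R).
have hsum : \sum_g F g = nR * (mR * (mR - 1) ^+ n.-1).
  by rewrite /F -natr_sum sum_A // !natrM natrX m1R.
have hmu : (\sum_g F g) / mR ^+ n = nR * ((mR - 1) / mR) ^+ n.-1.
  rewrite hsum -{2}(prednK n0) exprS expr_div_n.
  have hb : mR ^+ n.-1 != 0 by rewrite expf_neq0 // gt_eqF.
  have hm0 : mR != 0 by rewrite gt_eqF.
  move: (mR ^+ n.-1) hb => b hb; move: ((mR - 1) ^+ n.-1) => a.
  by field; rewrite hb hm0.
pose P := nR * expR (- (L / beta)).
pose S := P * expR (-1) / 2.
pose mu := (\sum_g F g) / mR ^+ n.
have mu_lb : P * expR (-1) <= mu.
  rewrite /mu hmu; apply: (mean_facts hbeta L2 m2R mm hm).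
  by rewrite /nR prednK.
have [tS hlam hld key] := final_facts hbeta hc L2 nE nK (erefl P) (erefl S) mu_lb.
have pw1 : nR `^ (1 - beta^-1) = P.
  rewrite /powR gt_eqF // -/L /P mulrBl mul1r expRD nE; congr (_ * expR _).
  by rewrite mulrC.
have pwc : nR `^ (- c) = expR (- (c * L)) by rewrite /powR gt_eqF // -/L mulNr.
rewrite pw1 pwc.
have hT : (0 < #|'I_m|)%N by rewrite card_ord; apply: leq_trans m2.
have hbd : bdiff 2 F.
  move=> f g i hi; rewrite /F.
  have h1 := A_diff hi.
  have h2 : (Acnt g <= Acnt f + 2)%N by apply: (A_diff (i := i)) => k /hi ->.
  move: h1 h2; rewrite -!(ler_nat R) !natrD => h1 h2.
  by rewrite ler_norml; apply/andP; split; clear - h1 h2; lra.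
have tb := @tail_bound R 'I_m n 2 (S / (16 * nR)) S F hT hlam hld hbd.
rewrite card_ord -/mR in tb.
have ex : 2 * nR * (S / (16 * nR)) ^+ 2 * 2 ^+ 2 - S / (16 * nR) * S
   = - (S ^+ 2 / (32 * nR)).
  by field; exact: lt0r_neq0 nR_pos.
rewrite ex in tb.
have Ele : expR (- (S ^+ 2 / (32 * nR))) <= expR (- (c * L)) by rewrite ler_expR lerN2.
rewrite /prob_X1_ge.
set Good := [set f : {ffun 'I_n -> 'I_m} | P / (4 * L) <= (X1 f)%:R].
set Bad := [set f : {ffun 'I_n -> 'I_m} | F f <= (\sum_g F g) / mR ^+ n - S] in tb.
have cover : (m ^ n <= #|Good| + #|Bad|)%N.
  have <- : #|{ffun 'I_n -> 'I_m}| = (m ^ n)%N by rewrite card_ffun !card_ord.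
  rewrite -cardsT; apply: leq_trans (leq_card_setU Good Bad).1.
  apply: subset_leq_card; apply/fintype.subsetP => f _; rewrite !inE.
  case: (boolP (P / (4 * L) <= (X1 f)%:R)) => //= h.
  have hA : (Acnt f <= X1 f)%N := A_le_X1 f.
  rewrite -(ler_nat R) in hA.
  rewrite -/mu /F; apply: le_trans tS; apply: le_trans hA _.
  by rewrite leNgt; apply/negP => h'; move/negP: h; apply; exact: ltW.
move: cover; rewrite -(ler_nat R) natrD natrX -/mR => cover.
have Mpos : 0 < mR ^+ n by apply: exprn_gt0.
rewrite ler_pdivlMr //.
have h1 : mR ^+ n * expR (- (S ^+ 2 / (32 * nR))) <= mR ^+ n * expR (- (c * L)).
  by apply: ler_wpM2l => //; exact: ltW.
move: (mR ^+ n) Mpos cover tb h1 => M Mpos cover tb h1.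
move: (#|Good|%:R : R) (#|Bad|%:R : R) cover tb => G B cover tb.
clear - cover tb h1; lra.
Qed.
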